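(* Let $f$, $X_n$, $X$, $Y$ be as in the context and let $n\geq 2$ (equivalently $f(n)\geq 2$). Every finite subgraph $\Gamma$ of $X$ with $|V\Gamma|\leq |VX_n|=(2^{2^{2n}}f(n)+1)f(n)$ admits a coarse $f(n)$-wiring into $Y$ of volume at most $2|VX_n|$. Hence \[ \mathrm{wir}^{f(n)}_{X\to Y}\big(|VX_n|\big)\leq 2|VX_n|. \]
   Context: Fix a function $f:\mathbb{N}\to\mathbb{N}$ (with $\mathbb{N}=\{1,2,\dots\}$) that is surjective, satisfies $f(1)=1$, $2\leq f(n)\leq n$ for all $n\geq 2$, and $|f^{-1}(k)|=\infty$ for every $k\geq 2$. For $n\in\mathbb{N}$ let $X_n$ be the graph with vertex set $\{0,1,\dots,f(n)-1\}\times\{0,1,\dots,2^{2^{2n}}f(n)\}$, with edges $(i,j)(i,j+1)$ for all $0\leq i\leq f(n)-1$, $0\leq j\leq 2^{2^{2n}}f(n)-1$, and $(i,j)(i+1,j)$ for all $0\leq i\leq f(n)-2$ and all $j$ that are multiples of $2^{2^{2n}}$. Let $Y_n$ be defined in the same way with $2^{2^{2n}}$ replaced everywhere by $2^{2^{2n+1}}$. Let $X=\bigsqcup_{n\geq1}X_n$ and $Y=\bigsqcup_{n\geq 1}Y_n$ (disjoint unions). A wiring of a finite graph $\Gamma$ into a graph $Y$ is a continuous map $g:\Gamma\to Y$ sending vertices to vertices and each edge onto a union of edges (a path between the images of its endpoints, or a single vertex if these coincide). It is a coarse $k$-wiring if each vertex of $Y$ has at most $k$ preimage vertices and each edge of $Y$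 is contained in the images of at most $k$ edges of $\Gamma$. Its volume is the number of vertices in its image. $\mathrm{wir}^k(\Gamma\to Y)$ is the minimal volume of a coarse $k$-wiring ($+\infty$ if none), and $\mathrm{wir}^k_{X\to Y}(n)=\max\{\mathrm{wir}^k(\Gamma\to Y):\Gamma\subseteq X,\ |V\Gamma|\leq n\}$. *)

(* Defs.v *)
From mathcomp Require Import all_boot.
Set Implicit Arguments. Unset Strict Implicit. Unset Printing Implicit Defensive.

(* Vertices of the disjoint unions X, Y are encoded as triples ((m, i), j):
   component index m >= 1 and grid coordinates (i, j). *)
Definition vtx := (nat * nat * nat)%type.

Definition baseX (m : nat) : nat := 2 ^ (2 ^ (2 * m)).
Definition baseY (m : nat) : nat := 2 ^ (2 ^ (2 * m).+1).

Definition gvert (a f : nat -> nat) (x : vtx) : bool :=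
  let: ((m, i), j) := x in [&& 1 <= m, i < f m & j <= a m * f m].

Definition gadj (a f : nat -> nat) (x y : vtx) : bool :=
  let: ((m, i), j) := x in
  let: ((m', i'), j') := y in
  [&& gvert a f x, gvert a f y, m == m' &
     ((i == i') && ((j' == j.+1) || (j == j'.+1)))
  || [&& j == j', a m %| j & (i' == i.+1) || (i == i'.+1)]].

Definition Xvert f := gvert baseX f.
Definition Xadj f := gadj baseX f.
Definition Yvert f := gvert baseY f.
Definition Yadj f := gadj baseY f.

Definition cardVXn (f : nat -> nat) (n : nat) : nat := (baseX n * f n + 1) * f n.

(* A finite subgraph Gamma of X, given by a vertex list VG and an edge list EG
   (each undirected edge listed once, in one orientation). *)
Definition subgraphX (f : nat -> nat) (VG : seq vtx) (EG : seq (vtx * vtx)) : Prop :=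
  [/\ uniq VG, all (Xvert f) VG, uniq EG,
      (forall e, e \in EG -> [/\ e.1 \in VG, e.2 \in VG & Xadj f e.1 e.2]) &
      (forall u v, (u, v) \in EG -> (v, u) \notin EG)].

(* A wiring: vertex map gv and, for every edge e = (u,v), a path
   gv u :: gp e in Y from gv u to gv v (simple path; the single vertex
   [gv u] when gv u = gv v). *)
Definition wiring (f : nat -> nat) (VG : seq vtx) (EG : seq (vtx * vtx))
  (gv : vtx -> vtx) (gp : vtx * vtx -> seq vtx) : Prop :=
  (forall u, u \in VG -> Yvert f (gv u)) /\
  (forall e, e \in EG ->
     [/\ path (Yadj f) (gv e.1) (gp e),
         last (gv e.1) (gp e) = gv e.2 &
         uniq (gv e.1 :: gp e)]).

Definition edge_in (y y' : vtx) (p : seq vtx) : bool :=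
  has (fun z : vtx * vtx => ((z.1 == y) && (z.2 == y')) || ((z.1 == y') && (z.2 == y)))
      (zip p (behead p)).

Definition coarse_wiring (k : nat) (f : nat -> nat) (VG : seq vtx) (EG : seq (vtx * vtx))
  (gv : vtx -> vtx) (gp : vtx * vtx -> seq vtx) : Prop :=
  [/\ wiring f VG EG gv gp,
      (forall y, count (fun u => gv u == y) VG <= k) &
      (forall y y', Yadj f y y' ->
         count (fun e => edge_in y y' (gv e.1 :: gp e)) EG <= k)].

Definition volume (VG : seq vtx) (EG : seq (vtx * vtx))
  (gv : vtx -> vtx) (gp : vtx * vtx -> seq vtx) : nat :=
  size (undup (map gv VG ++ flatten (map (fun e => gv e.1 :: gp e) EG))).

Definition good_f (f : nat -> nat) : Prop :=
  [/\ f 1 = 1,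
      (forall n, 2 <= n -> 2 <= f n <= n),
      (forall k, 1 <= k -> exists n, 1 <= n /\ f n = k) &
      (forall k, 2 <= k -> forall N, exists n, N <= n /\ f n = k)].

(* Main.v *)
Require Import Defs.
From mathcomp Require Import all_boot zify.
Set Implicit Arguments. Unset Strict Implicit. Unset Printing Implicit Defensive.

Lemma baseY_sq m : baseY m = baseX m * baseX m.
Proof. by rewrite /baseY /baseX expnS mulnC expnM expnS expn1. Qed.
Lemma baseX_ge2 m : 2 <= baseX m.
Proof. rewrite /baseX. have := ltn_expl (2 ^ (2*m)) (isT : 1 < 2). have := expn_gt0 2 (2*m). lia. Qed.

Section Constr.
Variables (f : nat -> nat) (n : nat) (VG : seq vtx).

Definition cutP m t r : bool :=
  ~~ has (fun u : vtx => (u.1.1 == m) && (u.2 == t * baseX m + r)) VG.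
Definition cut m t := find (cutP m t) (iota 0 (baseX m)).
Definition rho m t r := if r <= cut m t then r else r + (baseY m - baseX m).
Definition phi m j := j %/ baseX m * baseY m + rho m (j %/ baseX m) (j %% baseX m).
Definition psi m j := if m == n then j else phi m j.
Definition col m i := if m == n then 0 else i.
Definition gv (u : vtx) : vtx := ((u.1.1, col u.1.1 u.1.2), psi u.1.1 u.2).

Lemma phi_repr m t r : r < baseX m -> phi m (t * baseX m + r) = t * baseY m + rho m t r.
Proof.
move=> hr; have a0 : 0 < baseX m by have := baseX_ge2 m; lia.
by rewrite /phi divnMDl // modnMDl divn_small // modn_small // addn0.
Qed.

Lemma rho_lt m t r : r < baseX m -> rho m t r < baseY m.
Proof.
move=> hr; rewrite /rho baseY_sq; have := baseX_ge2 m.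
case: ifP => _; nia.
Qed.

Lemma rho_mono m t r r' : r < r' -> r' < baseX m -> rho m t r < rho m t r'.
Proof.
move=> h1 h2; rewrite /rho baseY_sq; have := baseX_ge2 m.
case: ifP; case: ifP => //; nia.
Qed.

Lemma phi_lt m j j' : j < j' -> phi m j < phi m j'.
Proof.
move=> hj; rewrite /phi.
set a := baseX m.
have a0 : 0 < a by have := baseX_ge2 m; lia.
have ej := divn_eq j a; have ej' := divn_eq j' a.
have hr := ltn_pmod j a0; have hr' := ltn_pmod j' a0.
have ht : j %/ a <= j' %/ a by apply: leq_div2r; lia.
have hB := rho_lt (j %/ a) hr.
have hB' := rho_lt (j' %/ a) hr'.
case: (ltngtP (j %/ a) (j' %/ a)) => [lt| |eq]; first by nia.
  by lia.
rewrite eq; have : j %% a < j' %% a by nia.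
move=> hlt; have := rho_mono (j' %/ a) hlt hr'. lia.
Qed.

Lemma phi_inj m j j' : phi m j = phi m j' -> j = j'.
Proof. move=> e; case: (ltngtP j j') => // h; have := phi_lt m h; lia. Qed.

Lemma psi_lt m j j' : j < j' -> psi m j < psi m j'.
Proof. rewrite /psi; case: ifP => // _; exact: phi_lt. Qed.
Lemma psi_inj m j j' : psi m j = psi m j' -> j = j'.
Proof. move=> e; case: (ltngtP j j') => // h; have := psi_lt m h; lia. Qed.

End Constr.

Lemma phi_rung VG m t : phi VG m (t * baseX m) = t * baseY m.
Proof.
have a0 : 0 < baseX m by have := baseX_ge2 m; lia.
by rewrite -[t * _]addn0 phi_repr // /rho leq0n addn0.
Qed.

Lemma phi_le VG m j F : j <= baseX m * F -> phi VG m j <= baseY m * F.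
Proof.
move=> hj; set a := baseX m.
have a0 : 0 < a by have := baseX_ge2 m; lia.
rewrite (divn_eq j a) phi_repr ?ltn_pmod //.
have hr := ltn_pmod j a0.
have hB := rho_lt VG (j %/ a) hr.
have ht : j %/ a <= F by have := leq_div2r a hj; rewrite mulKn.
case: (ltngtP (j %/ a) F) => [lt||eq]; first nia; first lia.
have : j %% a = 0.
  have hj' := hj; rewrite {1}(divn_eq j a) eq in hj'. nia.
move=> ->; rewrite /rho leq0n eq; nia.
Qed.

Lemma phi_step VG m j : cut VG m (j %/ baseX m) < baseX m ->
  j %% baseX m != cut VG m (j %/ baseX m) -> phi VG m j.+1 = (phi VG m j).+1.
Proof.
set a := baseX m; set t := j %/ a; set r := j %% a.
move=> hc hne.
have a0 : 0 < a by have := baseX_ge2 m; lia.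
have hr : r < a by apply: ltn_pmod.
have ej : j = t * a + r by apply: divn_eq.
have hB := baseY_sq m.
case: (ltngtP r.+1 a) => [lt||eq]; last first.
- have -> : j.+1 = t.+1 * a + 0 by lia.
  rewrite ej phi_repr // phi_repr // /rho leq0n.
  have -> : (r <= cut VG m t) = false by apply/negbTE; rewrite -ltnNge; move: hne; rewrite -/t -/r; lia.
  rewrite hB; fold a; move: hc; rewrite -/t => hc. nia.
- lia.
- rewrite ej -addnS !phi_repr // /rho.
  move: hne; rewrite -/t -/r => hne.
  case: ifP; case: ifP => ? ?; lia.
Qed.

Definition step (h1 h2 k : nat) := if h1 <= h2 then h1 + k else h1 - k.
Definition dist (h1 h2 : nat) := if h1 <= h2 then h2 - h1 else h1 - h2.
Definition tailpath (y1 y2 : vtx) : seq vtx :=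
  if y1.1 == y2.1 then map (fun k => (y1.1, step y1.2 y2.2 k)) (iota 1 (dist y1.2 y2.2))
  else [:: y2].

Lemma zip_iota (T : Type) (g : nat -> T) d s :
  zip (map g (iota s d.+1)) (map g (iota s.+1 d)) = map (fun k => (g k, g k.+1)) (iota s d).
Proof. by elim: d s => [|d IH] s //=; rewrite -IH. Qed.

Lemma path_iota (T : Type) (r : rel T) (g : nat -> T) d s :
  path r (g s) (map g (iota s.+1 d)) = all (fun k => r (g k) (g k.+1)) (iota s d).
Proof. by elim: d s => [|d IH] s //=; rewrite IH. Qed.

Lemma last_iota (T : Type) (g : nat -> T) d s :
  last (g s) (map g (iota s.+1 d)) = g (s + d).
Proof. elim: d s => [|d IH] s /=; first by rewrite addn0. by rewrite IH addSnnS. Qed.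

Lemma edge_inC y y' s : edge_in y y' s = edge_in y' y s.
Proof. rewrite /edge_in; apply: eq_has => z; by rewrite orbC. Qed.

Lemma tail_vert (mc : nat * nat) h1 h2 :
  tailpath (mc, h1) (mc, h2) = map (fun k => (mc, step h1 h2 k)) (iota 1 (dist h1 h2)).
Proof. by rewrite /tailpath eqxx. Qed.

Lemma tail_hor (y1 y2 : vtx) : y1.1 != y2.1 -> tailpath y1 y2 = [:: y2].
Proof. by rewrite /tailpath => /negbTE ->. Qed.

Lemma full_vert (mc : nat * nat) h1 h2 :
  (mc, h1) :: tailpath (mc, h1) (mc, h2) =
  map (fun k => (mc, step h1 h2 k)) (iota 0 (dist h1 h2).+1).
Proof. rewrite tail_vert /= /step; case: ifP => _; by rewrite ?addn0 ?subn0. Qed.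

Lemma step_dist h1 h2 : step h1 h2 (dist h1 h2) = h2.
Proof. rewrite /step /dist; case: (leqP h1 h2) => ?; lia. Qed.

Lemma Yadj_vert f m c h : Yvert f ((m, c), h) -> Yvert f ((m, c), h.+1) ->
  Yadj f ((m, c), h) ((m, c), h.+1).
Proof. by rewrite /Yadj /gadj /Yvert => -> -> /=; rewrite !eqxx. Qed.

Lemma Yvert_between f m c h h' : Yvert f ((m, c), h') -> h <= h' -> Yvert f ((m, c), h).
Proof. rewrite /Yvert /gvert => /and3P [-> -> h1] h2 /=; lia. Qed.

Lemma vert_wiring f (m c h1 h2 : nat) :
  Yvert f ((m, c), h1) -> Yvert f ((m, c), h2) ->
  [/\ path (Yadj f) ((m, c), h1) (tailpath ((m, c), h1) ((m, c), h2)),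
      last ((m, c), h1) (tailpath ((m, c), h1) ((m, c), h2)) = ((m, c), h2) &
      uniq (((m, c), h1) :: tailpath ((m, c), h1) ((m, c), h2))].
Proof.
move=> v1 v2.
set g := fun k => ((m, c), step h1 h2 k).
have g0 : g 0 = ((m, c), h1) by rewrite /g /step; case: ifP; rewrite ?addn0 ?subn0.
split.
- rewrite tail_vert -/g -g0 path_iota; apply/allP => k; rewrite mem_iota => /andP [_ hk].
  rewrite /g /step /dist in hk *; case: ifP => hle; rewrite hle in hk.
  + rewrite addnS; apply: Yadj_vert; [apply: (@Yvert_between f m c _ h2 v2) | apply: (@Yvert_between f m c _ h2 v2)]; lia.
  + have -> : h1 - k = (h1 - k.+1).+1 by lia.
    rewrite /Yadj /gadj.
    have w1 : Yvert f ((m, c), (h1 - k.+1).+1) by apply: (@Yvert_between f m c _ h1 v1); lia.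
    have w2 : Yvert f ((m, c), (h1 - k.+1)) by apply: (@Yvert_between f m c _ h1 v1); lia.
    move: w1 w2; rewrite /Yvert => -> -> /=; by rewrite !eqxx orbT.
- by rewrite tail_vert -/g -g0 last_iota add0n /g step_dist.
- rewrite full_vert -/g map_inj_in_uniq ?iota_uniq // => k k'; rewrite !mem_iota /g /step /dist.
  case: ifP => hle /andP [_ hk] /andP [_ hk'] [] ; lia.
Qed.

Lemma vert_edge_in (mc : nat * nat) h1 h2 y y' :
  edge_in y y' ((mc, h1) :: tailpath (mc, h1) (mc, h2)) ->
  exists h, [/\ minn h1 h2 <= h, h < maxn h1 h2 &
    (y = (mc, h) /\ y' = (mc, h.+1)) \/ (y = (mc, h.+1) /\ y' = (mc, h))].
Proof.
rewrite full_vert /edge_in; set g := fun k => (mc, step h1 h2 k).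
rewrite -/g (_ : behead (map g (iota 0 (dist h1 h2).+1)) = map g (iota 1 (dist h1 h2))) // zip_iota.
case/hasP => z /mapP [k]; rewrite mem_iota => /andP [_ hk] -> /=.
rewrite /g /step /dist in hk *; case: ifP => hle; rewrite hle in hk.
- move=> H; exists (h1 + k); split; [lia|lia|].
  rewrite addnS in H; case/orP: H => /andP [/eqP <- /eqP <-]; by [left|right].
- move=> H; exists (h1 - k.+1); split; [lia|lia|].
  have e1 : h1 - k = (h1 - k.+1).+1 by lia. rewrite e1 in H.
  case/orP: H => /andP [/eqP <- /eqP <-]; by [right|left].
Qed.

Lemma vert_sub (mc : nat * nat) h1 h2 : dist h1 h2 <= 1 ->
  {subset tailpath (mc, h1) (mc, h2) <= [:: (mc, h2)]}.
Proof.
rewrite tail_vert => hd z.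
case E: (dist h1 h2) hd => [|[|d]] // _ /=.
rewrite inE => /eqP ->; by rewrite -E step_dist inE.
Qed.

Lemma hor_edge_in (y1 y2 y y' : vtx) : y1.1 != y2.1 ->
  edge_in y y' (y1 :: tailpath y1 y2) ->
  (y1 = y /\ y2 = y') \/ (y1 = y' /\ y2 = y).
Proof.
move=> hne; rewrite tail_hor // /edge_in /= orbF.
by case/orP => /andP [/eqP -> /eqP ->]; [left|right].
Qed.

Lemma baseX_S m : baseX m.+1 = baseX m * baseX m * (baseX m * baseX m).
Proof.
rewrite /baseX mulnS expnD mulnC (expnM 2 (2 ^ (2 * m)) (2 ^ 2)).
set y := 2 ^ (2 ^ (2 * m)).
by rewrite !expnS expn0 muln1 !mulnA.
Qed.

Lemma baseX_mono m m' : m <= m' -> baseX m <= baseX m'.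
Proof. move=> h; rewrite /baseX leq_pexp2l // leq_pexp2l //; lia. Qed.

Lemma baseY_mono m m' : m <= m' -> baseY m <= baseY m'.
Proof. move=> h; rewrite /baseY leq_pexp2l // leq_pexp2l //; lia. Qed.

Lemma n_lt_baseX n : n < baseX n.
Proof.
rewrite /baseX; have h1 := ltn_expl (2 * n) (isT : 1 < 2).
have h2 := ltn_expl (2 ^ (2 * n)) (isT : 1 < 2). lia.
Qed.

Lemma sq_le_baseX k : 1 <= k -> k.+1 * k.+1 <= baseX k.
Proof.
move=> hk; rewrite /baseX.
have e1 : 2 * k.+1 <= 2 ^ (2 * k).
  case: k hk => [//|l] _.
  have := ltn_expl l (isT : 1 < 4).
  have : 2 ^ (2 * l.+1) = 4 * 4 ^ l by rewrite mulnS expnD expnM.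
  lia.
have e2 := ltn_expl k.+1 (isT : 1 < 2).
have e3 : 2 ^ (2 * k.+1) <= 2 ^ (2 ^ (2 * k)) by rewrite leq_pexp2l.
have : 2 ^ (2 * k.+1) = 2 ^ k.+1 * 2 ^ k.+1 by rewrite mul2n -addnn expnD.
nia.
Qed.

Lemma N_lt_baseX n F m : F <= n -> n < m -> (baseX n * F + 1) * F < baseX m.
Proof.
move=> hF hm.
have h1 := baseX_mono hm; rewrite baseX_S in h1.
have h2 := n_lt_baseX n; have h3 := baseX_ge2 n.
set b := baseX n in h1 h2 h3 *.
have hFb : F <= b by lia.
have : (b * F + 1) * F <= (b * b + 1) * b.
  by apply: leq_mul => //; rewrite leq_add2r; apply: leq_mul.
have : (b * b + 1) * b < b * b * (b * b) by nia.
lia.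
Qed.

Lemma S1_bound n F : 2 <= n -> 2 <= F ->
  (n.-1 * n) * (baseY n.-1 * n).+1 <= (baseX n * F + 1) * F.
Proof.
case: n => [//|k] hk hF /=.
rewrite baseY_sq baseX_S.
have h1 := sq_le_baseX (hk : 1 <= k).
set X := baseX k in h1 *.
have h2 : k.+1 * k.+1 * k.+1 <= X * X by nia.
have hX : 2 <= X by apply: baseX_ge2.
have h5 : k * k.+1 <= X * X by nia.
have h6 : k * k.+1 * (X * X * k.+1) <= k.+1 * k.+1 * k.+1 * (X * X).
  rewrite [X * X * _]mulnC mulnA; apply: leq_mul => //; apply: leq_mul => //; apply: leq_mul => //.
have h3 : k * k.+1 * (X * X * k.+1).+1 <= k.+1 * k.+1 * k.+1 * (X * X) + X * X.
  rewrite mulnSr; lia.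
have h4 : (X * X * (X * X) * 2 + 1) * 2 <= (X * X * (X * X) * F + 1) * F.
  by apply: leq_mul => //; rewrite leq_add2r; apply: leq_mul.
have h7 : k.+1 * k.+1 * k.+1 * (X * X) <= X * X * (X * X) by apply: leq_mul.
nia.
Qed.

Lemma Xadj_cases f u v : Xadj f u v -> exists m i i' j j',
  [/\ u = ((m, i), j), v = ((m, i'), j'), Xvert f u, Xvert f v &
   (i = i' /\ (j' = j.+1 \/ j = j'.+1)) \/
   (j = j' /\ baseX m %| j /\ (i' = i.+1 \/ i = i'.+1))].
Proof.
case: u => [[m i] j]; case: v => [[m' i'] j'].
rewrite /Xadj /gadj /Xvert => /and4P [h1 h2 /eqP em H]; subst m'.
exists m, i, i', j, j'; split => //.
case/orP: H => H.
- left; case/andP: H => /eqP -> /orP [] /eqP ->; split => //; by [left|right].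
- right; case/and3P: H => /eqP -> hd /orP [] /eqP ->; split => //; split => //; by [left|right].
Qed.

Lemma count_key (T : eqType) (s : seq T) (P : pred T) (k : T -> nat) (K : seq nat) :
  uniq s -> {in s &, forall x x', P x -> P x' -> k x = k x' -> x = x'} ->
  {in s, forall x, P x -> k x \in K} -> count P s <= size K.
Proof.
move=> us inj mem; rewrite -size_filter -(size_map k).
apply: uniq_leq_size.
- rewrite map_inj_in_uniq ?filter_uniq // => x x'; rewrite !mem_filter.
  case/andP => px xs /andP [px' xs']; exact: inj.
- move=> z /mapP [x]; rewrite mem_filter => /andP [px xs] ->; exact: mem.
Qed.


Section Main.
Variables (f : nat -> nat) (n : nat) (VG : seq vtx) (EG : seq (vtx * vtx)).
Hypothesis hf : good_f f.
Hypothesis hn : 2 <= n.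

Local Notation G := (gv n VG).

Lemma fn_ge2 : 2 <= f n.
Proof. by case: hf => _ H _ _; case/andP: (H n hn). Qed.

Lemma f_le m : 1 <= m -> f m <= m.
Proof.
case: hf => h1 H _ _ hm; case: m hm => [|[|m]] hm //; first by rewrite h1.
by case/andP: (H m.+2 isT).
Qed.

Lemma gv_Yvert u : Xvert f u -> Yvert f (G u).
Proof.
case: u => [[m i] j]; rewrite /Xvert /Yvert /gvert /gv /col /psi /= => /and3P [h1 h2 h3].
rewrite h1 /=; case: (eqVneq m n) => [em|hne]; first subst m.
- have := fn_ge2; rewrite baseY_sq; have := baseX_ge2 n.
  move=> ? ?. apply/andP; split; first lia. move: h3. nia.
- rewrite h2 /=. exact: phi_le.
Qed.

Lemma gv_eq u v : G u = G v -> [/\ u.1.1 = v.1.1, u.2 = v.2 & (u.1.1 != n -> u.1.2 = v.1.2)].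
Proof.
case: u => [[m i] j]; case: v => [[m' i'] j']; rewrite /gv /= => [[em]]; subst m'.
rewrite /col; case: ifP => hm ec ej; split => //.
all: exact: psi_inj ej.
Qed.

Lemma gv_inj u v : u.1.1 != n -> G u = G v -> u = v.
Proof.
move=> hne /gv_eq [e1 e2 /(_ hne) e3].
case: u v e1 e2 e3 {hne} => [[m i] j] [[m' i'] j'] /= -> -> -> //.
Qed.


Lemma gvE m i j : G ((m, i), j) = ((m, col n m i), psi n VG m j).
Proof. by []. Qed.

Lemma phi_rungY m j : baseX m %| j -> baseY m %| phi VG m j.
Proof. move=> hd; rewrite -(divnK hd) phi_rung; exact: dvdn_mull. Qed.

Lemma edge_wiring u v : Xadj f u v ->
  [/\ path (Yadj f) (G u) (tailpath (G u) (G v)),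
      last (G u) (tailpath (G u) (G v)) = G v &
      uniq (G u :: tailpath (G u) (G v))].
Proof.
case/Xadj_cases => m [i] [i'] [j] [j'] [eu ev hu hv H].
have yu := gv_Yvert hu; have yv := gv_Yvert hv.
subst u v; rewrite !gvE in yu yv *.
case: H => [[ei _]|[ej [hd hi]]].
- subst i'; exact: vert_wiring.
- subst j'; case: (eqVneq m n) => [em|hne].
  + subst m; rewrite /col eqxx in yu yv *; exact: vert_wiring.
  + have hc : col n m i != col n m i' by rewrite /col (negbTE hne); case: hi => ->; lia.
    rewrite tail_hor /=; last by rewrite xpair_eqE (negbTE hc) andbF.
    split => //; last by rewrite inE andbT !xpair_eqE (negbTE hc) andbF.
    move: yu yv; rewrite /Yvert /gvert => /and3P [y1 y2 y3] /and3P [_ y4 _].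
    rewrite andbT /Yadj /gadj /gvert y1 y2 y3 y4 eqxx /=; apply/orP; right.
    rewrite /psi (negbTE hne) eqxx phi_rungY //= /col (negbTE hne).
    by case: hi => ->; rewrite eqxx ?orbT.
Qed.


Lemma trav u v y y' : Xadj f u v -> edge_in y y' (G u :: tailpath (G u) (G v)) ->
  (exists m i j h, [/\ u.1 = (m, i), v.1 = (m, i),
      (u.2 = j /\ v.2 = j.+1) \/ (u.2 = j.+1 /\ v.2 = j),
      psi n VG m j <= h < psi n VG m j.+1 &
      (y = ((m, col n m i), h) /\ y' = ((m, col n m i), h.+1)) \/
      (y = ((m, col n m i), h.+1) /\ y' = ((m, col n m i), h))])
  \/ [/\ u.1.1 != n, u.1.1 = v.1.1, u.1.2 != v.1.2 &
      (G u = y /\ G v = y') \/ (G u = y' /\ G v = y)].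
Proof.
case/Xadj_cases => m [i] [i'] [j] [j'] [eu ev hu hv H].
subst u v; rewrite !gvE.
case: H => [[ei hj]|[ej [hd hi]]].
- subst i' => /vert_edge_in [h [h1 h2 hy]]; left.
  case: hj => ej; subst.
  + have lt := psi_lt n VG m (ltnSn j).
    exists m, i, j, h; split; [done|done|by left| |done].
    apply/andP; split; move: h1 h2; rewrite /minn /maxn lt; lia.
  + have lt := psi_lt n VG m (ltnSn j').
    exists m, i, j', h; split; [done|done|by right| |done].
    apply/andP; split; move: h1 h2; rewrite /minn /maxn ltnNge (ltnW lt) /=; lia.
- subst j'; case: (eqVneq m n) => [em|hne].
  + subst m; rewrite /col eqxx => /vert_edge_in [h [h1 h2 _]].
    move: h1 h2; rewrite minnn maxnn; lia.
  + move=> /hor_edge_in H; right; split => //=.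
    * by case: hi => ->; lia.
    * apply: H; rewrite /= /col (negbTE hne) xpair_eqE eqxx /=.
      by case: hi => ->; lia.
Qed.


Lemma psi_unique m j j' p : psi n VG m j <= p < psi n VG m j.+1 ->
  psi n VG m j' <= p < psi n VG m j'.+1 -> j = j'.
Proof.
move=> /andP [a1 a2] /andP [b1 b2].
case: (ltngtP j j') => // h.
- have : psi n VG m j.+1 <= psi n VG m j'.
    case: (ltngtP j.+1 j') => [h'||->] //; [by move/(psi_lt n VG m): h'; lia|lia].
  lia.
- have : psi n VG m j'.+1 <= psi n VG m j.
    case: (ltngtP j'.+1 j) => [h'||->] //; [by move/(psi_lt n VG m): h'; lia|lia].
  lia.
Qed.


Hypothesis hsub : subgraphX f VG EG.

Lemma VG_Xvert u : u \in VG -> Xvert f u.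
Proof. by case: hsub => _ /allP H _ _ _ /H. Qed.

Lemma vertex_count y : count (fun u => G u == y) VG <= f n.
Proof.
have fn2 := fn_ge2.
set K := if y.1.1 == n then iota 0 (f n) else [:: y.1.2].
have hK : size K <= f n by rewrite /K; case: ifP; rewrite ?size_iota //=; lia.
apply: leq_trans hK; apply: (@count_key _ _ _ (fun u : vtx => u.1.2)).
- by case: hsub.
- move=> u u' _ _ /eqP e1 /eqP e2 ei; rewrite -e2 in e1; clear e2.
  case/gv_eq: e1 => h1 h2 _; case: u u' h1 h2 ei => [[m i] j] [[m' i'] j'] /= -> -> -> //.
- move=> u /VG_Xvert; case: u => [[m i] j]; rewrite gvE /K => hx /eqP <- /=.
  move: hx; rewrite /Xvert /gvert => /and3P [_ hi _].
  case: (eqVneq m n) => [em|hne]; first by subst m; rewrite mem_iota.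
  by rewrite /col (negbTE hne) inE.
Qed.

Lemma EG_prop e : e \in EG -> [/\ e.1 \in VG, e.2 \in VG & Xadj f e.1 e.2].
Proof. by case: hsub => _ _ _ H _; apply: H. Qed.

Lemma EG_anti u v : (u, v) \in EG -> (v, u) \notin EG.
Proof. by case: hsub => _ _ _ _ H; apply: H. Qed.

Local Notation W e := (G e.1 :: tailpath (G e.1) (G e.2)).

Lemma vtrav (mc : nat * nat) p e : e \in EG -> edge_in (mc, p) (mc, p.+1) (W e) ->
  exists i j, [/\ e.1.1 = (mc.1, i), e.2.1 = (mc.1, i),
    (e.1.2 = j /\ e.2.2 = j.+1) \/ (e.1.2 = j.+1 /\ e.2.2 = j),
    col n mc.1 i = mc.2 & psi n VG mc.1 j <= p < psi n VG mc.1 j.+1].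
Proof.
move=> eE; have [_ _ hadj] := EG_prop eE.
case/(trav hadj) => [[m [i [j [h [e1 e2 hj hh hy]]]]]|[hne em hi hy]].
- exists i, j; case: hy => [[y1 y2]|[y1 y2]].
  + case: y1 => emc ep; subst mc p; by split.
  + case: y1 y2 => ? ? [?]; lia.
- exfalso.
  have c1 : (G e.1).1.2 = e.1.1.2 by rewrite /gv /col /= (negbTE hne).
  have c2 : (G e.2).1.2 = e.2.1.2 by rewrite /gv /col /= -em (negbTE hne).
  move/negP: hi; apply; rewrite -c1 -c2.
  by case: hy => [[-> ->]|[-> ->]].
Qed.

Lemma vert_count (mc : nat * nat) p :
  count (fun e => edge_in (mc, p) (mc, p.+1) (W e)) EG <= f n.
Proof.
have fn2 := fn_ge2.
set K := if mc.1 == n then iota 0 (f n) else [:: mc.2].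
have hK : size K <= f n by rewrite /K; case: ifP; rewrite ?size_iota //=; lia.
apply: leq_trans hK; apply: (@count_key _ _ _ (fun e : vtx * vtx => e.1.1.2)).
- by case: hsub.
- move=> e e' eE eE' /(vtrav eE) [i [j [e1 e2 hj hc hp]]] /(vtrav eE') [i' [j' [e1' e2' hj' hc' hp']]].
  rewrite e1 e1' /= => ei; subst i'.
  have ej := psi_unique hp hp'; subst j'.
  case: e eE e1 e2 hj {hp hc} => [[u1 u2] [v1 v2]] /= eE ? ? hj; subst u1 v1.
  case: e' eE' e1' e2' hj' {hp' hc'} => [[u1' u2'] [v1' v2']] /= eE' ? ? hj'; subst u1' v1'.
  case: hj => [[? ?]|[? ?]]; case: hj' => [[? ?]|[? ?]]; subst => //.
  + by move/EG_anti: eE; rewrite eE'.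
  + by move/EG_anti: eE; rewrite eE'.
- move=> e eE /(vtrav eE) [i [j [e1 e2 hj hc hp]]]; rewrite e1 /K /=.
  case: (eqVneq mc.1 n) => [em|hne].
  + have [e1V _ _] := EG_prop eE; have := VG_Xvert e1V; clear e1V.
    case: e eE e1 {e2 hj hp hc} => [[u1 u2] v] /= _ ->.
    by rewrite /Xvert /gvert em mem_iota => /and3P [_ -> _].
  + by rewrite -hc /col (negbTE hne) inE.
Qed.

Lemma hor_count (y y' : vtx) : y.1.1 = y'.1.1 -> y.1.2 != y'.1.2 ->
  count (fun e => edge_in y y' (W e)) EG <= f n.
Proof.
move=> em hc; have fn2 := fn_ge2.
have hy1 : y.1 != y'.1 by apply: contra hc => /eqP ->.
have htr : forall e, e \in EG -> edge_in y y' (W e) ->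
    [/\ e.1.1.1 != n, e.1.1.1 = e.2.1.1, e.1.1.2 != e.2.1.2 &
      (G e.1 = y /\ G e.2 = y') \/ (G e.1 = y' /\ G e.2 = y)].
  move=> e eE tr; have [_ _ hadj] := EG_prop eE.
  case: (trav hadj tr) => [[m [i [j [h [_ _ _ _ hy]]]]]|//].
  by exfalso; move/negP: hy1; apply; case: hy => [[-> ->]|[-> ->]].
have colG : forall u, u.1.1 != n -> (G u).1.2 = u.1.2.
  by move=> u hu; rewrite /gv /col /= (negbTE hu).
apply: (@leq_trans (size [:: y.1.2; y'.1.2])) => //.
apply: (@count_key _ _ _ (fun e : vtx * vtx => e.1.1.2)).
- by case: hsub.
- move=> e e' eE eE' /(htr _ eE) [hne em1 _ hy] /(htr _ eE') [hne' em1' _ hy'] ek.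
  have gu : G e.1 = G e'.1.
    have k1 := colG _ hne; have k2 := colG _ hne'.
    case: hy => [[a1 _]|[a1 _]]; case: hy' => [[b1 _]|[b1 _]]; rewrite a1 b1 // in k1 k2 *;
    exfalso; move/negP: hc; apply; apply/eqP; by rewrite k1 k2.
  have eu := gv_inj hne gu.
  have gv' : G e.2 = G e'.2.
    case: hy => [[a1 a2]|[a1 a2]]; case: hy' => [[b1 b2]|[b1 b2]]; rewrite ?a2 ?b2 //;
    exfalso; move/negP: hy1; apply; apply/eqP; congruence.
  have ev : e.2 = e'.2 by apply: gv_inj gv'; rewrite -em1.
  by case: e e' {eE eE' hy hy' gu gv' hne hne' em1 em1' ek} eu ev => [u v] [u' v'] /= -> ->.
- move=> e eE /(htr _ eE) [hne _ _ hy]; rewrite -colG //.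
  by case: hy => [[-> _]|[-> _]]; rewrite !inE eqxx ?orbT.
Qed.

Lemma edge_count y y' : Yadj f y y' ->
  count (fun e => edge_in y y' (W e)) EG <= f n.
Proof.
case: y => [[m c] p]; case: y' => [[m' c'] p'].
rewrite /Yadj /gadj => /and4P [_ _ /eqP em H]; subst m'.
case/orP: H => [/andP [/eqP ec /orP [] /eqP ep]|/and3P [_ _ hc]].
- subst c' p'; exact: vert_count.
- subst c' p; rewrite (eq_count (a2 := fun e => edge_in (m, c, p') (m, c, p'.+1) (W e))).
    exact: vert_count.
  by move=> e; rewrite edge_inC.
- apply: hor_count => //=; case/orP: hc => /eqP ->; lia.
Qed.

Hypothesis hsize : size VG <= cardVXn f n.

Lemma cut_lt m t : n < m -> cut VG m t < baseX m.
Proof.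
move=> hm; rewrite /cut; set a := baseX m.
have := has_find (cutP VG m t) (iota 0 a); rewrite size_iota => <-.
apply/negPn/negP => /hasPn H.
have sub : {subset iota 0 a <= map (fun u : vtx => u.2 - t * a) VG}.
  move=> r hr; have := H r hr; rewrite /cutP negbK => /hasP [u uV /andP [_ /eqP eu]].
  apply/mapP; exists u => //; rewrite eu; lia.
have := uniq_leq_size (iota_uniq 0 a) sub; rewrite size_iota size_map.
have := N_lt_baseX (f_le (ltnW hn)) hm.
move: hsize; rewrite /cardVXn -/a; lia.
Qed.

Lemma cut_avoid m t u : n < m -> u \in VG -> u.1.1 = m ->
  u.2 != t * baseX m + cut VG m t.
Proof.
move=> hm uV um; have hc := cut_lt t hm.
have hh : has (cutP VG m t) (iota 0 (baseX m)) by rewrite has_find size_iota.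
have := nth_find 0 hh; rewrite -/(cut VG m t) nth_iota // add0n /cutP.
move/hasPn/(_ u uV); by rewrite um eqxx.
Qed.

Lemma psi_step m i j : n <= m -> ((m, i), j) \in VG ->
  psi n VG m j.+1 = (psi n VG m j).+1.
Proof.
move=> hm uV; rewrite /psi; case: (eqVneq m n) => [//|hne].
have hm' : n < m by lia.
set a := baseX m.
apply: phi_step; first exact: cut_lt.
have := cut_avoid (j %/ a) hm' uV erefl; rewrite /= -/a.
apply: contra => /eqP <-; by rewrite -divn_eq.
Qed.

Lemma Yadj_props x y : Yadj f x y -> [/\ Yvert f x, Yvert f y & x.1.1 = y.1.1].
Proof.
case: x => [[m c] p]; case: y => [[m' c'] p'].
rewrite /Yadj /gadj => /and4P [h1 h2 /eqP em _]; subst m'; by split.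
Qed.

Lemma path_Yvert x s : path (Yadj f) x s -> Yvert f x ->
  forall z, z \in x :: s -> Yvert f z /\ z.1.1 = x.1.1.
Proof.
elim: s x => [|y s IH] x /=.
- by move=> _ hx z; rewrite inE => /eqP ->.
- case/andP => /Yadj_props [_ hy exy] hp hx z; rewrite inE => /orP [/eqP -> //|hz].
  have [? ->] := IH y hp hy z hz; by rewrite exy.
Qed.

Lemma tail_sub e : e \in EG -> n <= e.1.1.1 ->
  {subset tailpath (G e.1) (G e.2) <= [:: G e.2]}.
Proof.
move=> eE; have [e1V e2V hadj] := EG_prop eE.
move: e1V e2V; case/Xadj_cases: hadj => m [i] [i'] [j] [j'] [-> -> _ _ H] e1V e2V /= hm.
rewrite !gvE; case: H => [[ei hj]|[ej [hd hi]]].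
- subst i'; apply: vert_sub; case: hj => ?; subst.
  + rewrite (psi_step hm e1V) /dist; case: ifP; lia.
  + rewrite (psi_step hm e2V) /dist; case: ifP; lia.
- subst j'; case: (eqVneq m n) => [em|hne].
  + subst m; rewrite /col eqxx; apply: vert_sub; rewrite /dist; case: ifP; lia.
  + rewrite tail_hor // /= /col (negbTE hne) xpair_eqE eqxx /=.
    by case: hi => ->; lia.
Qed.

Definition S1 := [seq (mi, j) | mi <- [seq (m, i) | m <- iota 1 n.-1, i <- iota 0 n],
                                j <- iota 0 (baseY n.-1 * n).+1].

Lemma S1_mem z : Yvert f z -> z.1.1 < n -> z \in S1.
Proof.
case: z => [[m i] j]; rewrite /Yvert /gvert /= => /and3P [h1 h2 h3] hm.
apply: allpairs_f; [apply: allpairs_f|]; rewrite mem_iota.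
- lia.
- have := f_le h1; lia.
- have := baseY_mono (_ : m <= n.-1); have := f_le h1.
  move=> a b; have {b} b := b ltac:(lia).
  have : baseY m * f m <= baseY n.-1 * n by apply: leq_mul => //; lia.
  lia.
Qed.

Lemma S1_size : size S1 <= cardVXn f n.
Proof. rewrite !size_allpairs !size_iota; exact: S1_bound hn fn_ge2. Qed.

Lemma main_exists : exists (gv : vtx -> vtx) (gp : vtx * vtx -> seq vtx),
    coarse_wiring (f n) f VG EG gv gp /\ volume VG EG gv gp <= 2 * cardVXn f n.
Proof.
exists G, (fun e => tailpath (G e.1) (G e.2)); split.
- split.
  + split; first by move=> u /VG_Xvert/gv_Yvert.
    by move=> e /EG_prop [_ _ /edge_wiring].
  + exact: vertex_count.
  + exact: edge_count.
- rewrite /volume.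
  set L := _ ++ _.
  have sub : {subset undup L <= S1 ++ map G VG}.
    move=> z; rewrite mem_undup mem_cat => /orP [hz|/flattenP [s /mapP [e eE ->] hz]].
      by rewrite mem_cat hz orbT.
    have [e1V e2V hadj] := EG_prop eE.
    have G1 : G e.1 \in map G VG by apply: map_f.
    have G2 : G e.2 \in map G VG by apply: map_f.
    move: hz; rewrite inE mem_cat => /orP [/eqP ->|hz]; first by rewrite G1 orbT.
    case: (ltnP e.1.1.1 n) => hm.
    + have [pth _ _] := edge_wiring hadj.
      have hz' : z \in G e.1 :: tailpath (G e.1) (G e.2) by rewrite inE hz orbT.
      have [yz ez] := path_Yvert pth (gv_Yvert (VG_Xvert e1V)) hz'.
      by rewrite S1_mem // ez.
    + by move: (tail_sub eE hm hz); rewrite inE => /eqP ->; rewrite G2 orbT.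
  have := uniq_leq_size (undup_uniq L) sub.
  rewrite size_cat size_map; move=> b; apply: leq_trans b _. rewrite mul2n -addnn; apply: leq_add => //; exact: S1_size.
Qed.

End Main.

Theorem lemma4p2 (f : nat -> nat) (hf : good_f f) (n : nat) (hn : 2 <= n)
  (VG : seq vtx) (EG : seq (vtx * vtx)) :
  subgraphX f VG EG -> size VG <= cardVXn f n ->
  exists (gv : vtx -> vtx) (gp : vtx * vtx -> seq vtx),
    coarse_wiring (f n) f VG EG gv gp /\ volume VG EG gv gp <= 2 * cardVXn f n.
Proof. move=> hsub hsize; exact: main_exists. Qed.
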